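(* Let $\alpha$ be a nonzero real number and let $\gamma(t)=\Psi(u(t),v(t))$ be a regular curve in $\mathbb H^2$ not passing through $N$. Then $\gamma$ is an $\alpha$-stationary curve if and only if $$\kappa=\alpha\,\frac{\langle \mathbf n,\xi\rangle_\epsilon}{\mathsf d}$$ along $\gamma$. Here $\mathbf n$ is the unit normal of $\gamma$, $\mathsf d$ is the hyperbolic distance from $\gamma(t)$ to $N$, and $\xi$ is the unit tangent vector at $\gamma(t)$ of the ray from $N$ through $\gamma(t)$.
   Context: Let $\langle x,y\rangle_\epsilon=x_1y_1+x_2y_2-x_3y_3$ be the Lorentzian inner product on $\mathbb R^3$ and $|x|_\epsilon=\sqrt{|\langle x,x\rangle_\epsilon|}$. The hyperbolic plane is $\mathbb H^2=\{(x,y,z):x^2+y^2-z^2=-1,\ z>0\}$ with the induced metric. It is parametrized by $\Psi(u,v)=(\sinh u\cos v,\sinh u\sin v,\cosh u)$. Let $N=(0,0,1)$. The hyperbolic distance from $\Psi(u,v)$ ($u\ge0$) to $N$ is $u$. Rays from $N$ are the geodesics $u\mapsto\Psi(u,v_0)$, $u>0$. For $p=\Psi(u,v)\neq N$, set $\xi(p)=\Psi_u(u,v)=(\cosh u\cos v,\cosh u\sin v,\sinh u)$; this is the unit tangent of the ray through $p$, pointing away from $N$. For a regular curve $\gamma(t)=\Psi(u(t),v(t))$ with $u>0$, we have $|\gamma'|_\epsilon=\sqrt{u'^2+\sinh^2(u)v'^2}$. Its unit normal is $$\mathbf n=\frac{1}{|\gamma'|_\epsilon}\big(u'\sin v+\sinh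 u\cosh u\,v'\cos v,\ \sinh u\cosh u\,v'\sin v-u'\cos v,\ \sinh^2(u)\,v'\big).$$ Its curvature is $\kappa=\langle\gamma'',\mathbf n\rangle_\epsilon/|\gamma'|_\epsilon^2$. The energy of $\gamma$ is $$E_\alpha[\gamma]=\int_\gamma\mathsf d^\alpha\,ds=\int u^\alpha\sqrt{u'^2+\sinh^2(u)v'^2}\,dt.$$ An $\alpha$-stationary curve is a critical point of $E_\alpha$, i.e. $(u,v)$ satisfies its Euler–Lagrange equations. Throughout the paper, $\alpha\ne0$ and curves avoid $N$. *)

(* Defs.v *)
From Stdlib Require Import Reals.
From Coquelicot Require Import Coquelicot.
Open Scope R_scope.

Definition R3 := (R * R * R)%type.
Definition c1 (x : R3) : R := fst (fst x).
Definition c2 (x : R3) : R := snd (fst x).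
Definition c3 (x : R3) : R := snd x.

Definition linner (x y : R3) : R := c1 x * c1 y + c2 x * c2 y - c3 x * c3 y.

Definition Psi (u v : R) : R3 := (sinh u * cos v, sinh u * sin v, cosh u).

Definition gamma (u v : R -> R) (t : R) : R3 := Psi (u t) (v t).

Definition vderive (f : R -> R3) (t : R) : R3 :=
  (Derive (fun s => c1 (f s)) t, Derive (fun s => c2 (f s)) t,
   Derive (fun s => c3 (f s)) t).

(* |gamma'|_eps = sqrt(u'^2 + sinh^2(u) v'^2) *)
Definition speed (u v : R -> R) (t : R) : R :=
  sqrt ((Derive u t) ^ 2 + (sinh (u t)) ^ 2 * (Derive v t) ^ 2).

Definition normal (u v : R -> R) (t : R) : R3 :=
  let u0 := u t in let v0 := v t in
  let du := Derive u t in let dv := Derive v t in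
  let s := speed u v t in
  ((du * sin v0 + sinh u0 * cosh u0 * dv * cos v0) / s,
   (sinh u0 * cosh u0 * dv * sin v0 - du * cos v0) / s,
   ((sinh u0) ^ 2 * dv) / s).

Definition curvature (u v : R -> R) (t : R) : R :=
  linner (vderive (vderive (gamma u v)) t) (normal u v t) / (speed u v t) ^ 2.

(* xi(p) = Psi_u(u,v): unit tangent of the ray from N through p = Psi(u,v) *)
Definition xi (u v : R) : R3 := (cosh u * cos v, cosh u * sin v, sinh u).

(* hyperbolic distance from Psi(u,v) (u >= 0) to N = (0,0,1); equals u *)
Definition distN (u v : R) : R := u.

Definition Lag (alpha : R) (x y p q : R) : R :=
  Rpower x alpha * sqrt (p ^ 2 + (sinh x) ^ 2 * q ^ 2).

Definition in_open_int (a b : Rbar) (t : R) : Prop := Rbar_lt a t /\ Rbar_lt t b.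

(* alpha-stationary: the Euler-Lagrange equations of E_alpha hold on (a,b):
   d/dt (dL/du') = dL/du  and  d/dt (dL/dv') = dL/dv. *)
Definition stationary (alpha : R) (a b : Rbar) (u v : R -> R) : Prop :=
  forall t, in_open_int a b t ->
    is_derive
      (fun s => Derive (fun p => Lag alpha (u s) (v s) p (Derive v s)) (Derive u s))
      t
      (Derive (fun x => Lag alpha x (v t) (Derive u t) (Derive v t)) (u t))
    /\
    is_derive
      (fun s => Derive (fun q => Lag alpha (u s) (v s) (Derive u s) q) (Derive v s))
      t
      (Derive (fun y => Lag alpha (u t) y (Derive u t) (Derive v t)) (v t)).

(* Main.v *)
Require Import Defs.
From Stdlib Require Import Reals.
From Coquelicot Require Import Coquelicot.
Open Scope R_scope.
From Stdlib Require Import Lra.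

Lemma sinh_pos x : 0 < x -> 0 < sinh x.
Proof. intro H. unfold sinh. assert (exp (-x) < exp x) by (apply exp_increasing; lra). lra. Qed.

Lemma ch2sh2 x : cosh x ^ 2 - sinh x ^ 2 = 1.
Proof. unfold cosh, sinh. rewrite exp_Ropp. assert (exp x <> 0) by (apply Rgt_not_eq, exp_pos). field. auto. Qed.

Lemma sn2cs2 x : sin x ^ 2 + cos x ^ 2 = 1.
Proof. pose proof (sin2_cos2 x). unfold Rsqr in H. lra. Qed.

Lemma sqrt_pos_arg x : 0 < sqrt x -> 0 < x.
Proof. intro H. destruct (Rle_lt_dec x 0) as [h|h]; auto. rewrite sqrt_neg_0 in H; lra. Qed.

Lemma loc_int a b t : in_open_int a b t -> locally t (fun s => in_open_int a b s).
Proof. intros [h1 h2]. apply filter_and. apply (open_Rbar_gt' t a h1). apply (open_Rbar_lt' t b h2). Qed.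

Lemma sqrt_rw X Y : X = Y -> sqrt X = sqrt Y.
Proof. intros ->; auto. Qed.

Lemma is_derive_sinh x : is_derive sinh x (cosh x).
Proof. unfold sinh, cosh. auto_derive; auto. field. Qed.
Lemma is_derive_cosh x : is_derive cosh x (sinh x).
Proof. unfold sinh, cosh. auto_derive; auto. field. Qed.
Lemma ex_derive_sinh x : ex_derive sinh x.
Proof. eexists; apply is_derive_sinh. Qed.
Lemma ex_derive_cosh x : ex_derive cosh x.
Proof. eexists; apply is_derive_cosh. Qed.
Lemma Derive_sinh x : Derive sinh x = cosh x.
Proof. apply is_derive_unique, is_derive_sinh. Qed.
Lemma Derive_cosh x : Derive cosh x = sinh x.
Proof. apply is_derive_unique, is_derive_cosh. Qed.
Lemma is_derive_Rpow al x : 0 < x -> is_derive (fun x => Rpower x al) x (al * Rpower x al / x).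
Proof. intro H. unfold Rpower. auto_derive; auto. field. lra. Qed.
Lemma ex_derive_Rpow al x : 0 < x -> ex_derive (fun x => Rpower x al) x.
Proof. intro H; eexists; apply is_derive_Rpow; auto. Qed.
Lemma Derive_Rpow al x : 0 < x -> Derive (fun x => Rpower x al) x = al * Rpower x al / x.
Proof. intro H; apply is_derive_unique, is_derive_Rpow; auto. Qed.
Lemma Rpow_pos x al : 0 < Rpower x al.
Proof. apply exp_pos. Qed.

Ltac posarg H := eapply Rlt_le_trans; [exact H| right; ring].

Lemma DLp alpha x y p q : 0 < p^2 + sinh x ^2 * q^2 ->
  Derive (fun p => Lag alpha x y p q) p = Rpower x alpha * p / sqrt (p^2 + sinh x ^2 * q^2).
Proof. intro H. apply is_derive_unique. unfold Lag. auto_derive.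
  - posarg H.
  - rewrite (sqrt_rw _ (p^2 + sinh x ^2 * q^2)) by ring.
    assert (0 < sqrt (p^2 + sinh x ^2 * q^2)) by (apply sqrt_lt_R0; auto). field. lra.
Qed.
Lemma DLq alpha x y p q : 0 < p^2 + sinh x ^2 * q^2 ->
  Derive (fun q => Lag alpha x y p q) q = Rpower x alpha * (sinh x ^2 * q) / sqrt (p^2 + sinh x ^2 * q^2).
Proof. intro H. apply is_derive_unique. unfold Lag. auto_derive.
  - posarg H.
  - rewrite (sqrt_rw _ (p^2 + sinh x ^2 * q^2)) by ring.
    assert (0 < sqrt (p^2 + sinh x ^2 * q^2)) by (apply sqrt_lt_R0; auto). field. lra.
Qed.
Lemma DLy alpha x y p q : Derive (fun y => Lag alpha x y p q) y = 0.
Proof. apply is_derive_unique. unfold Lag. auto_derive; auto. Qed.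
Lemma DLx alpha x y p q : 0 < x -> 0 < p^2 + sinh x ^2 * q^2 ->
  Derive (fun x => Lag alpha x y p q) x = alpha * Rpower x alpha / x * sqrt (p^2 + sinh x ^2 * q^2)
    + Rpower x alpha * (sinh x * cosh x * q^2) / sqrt (p^2 + sinh x ^2 * q^2).
Proof. intros Hx H. apply is_derive_unique. unfold Lag. auto_derive.
  - repeat split; auto using ex_derive_Rpow; try posarg H.
  - rewrite Derive_Rpow by auto. rewrite (sqrt_rw _ (p^2 + sinh x ^2 * q^2)) by ring.
    assert (0 < sqrt (p^2 + sinh x ^2 * q^2)) by (apply sqrt_lt_R0; auto). field. lra.
Qed.

Ltac canon_sqrt E := let S := fresh "Sq" in set (S := sqrt E) in *; rewrite ?(sqrt_rw _ E) by ring; fold S.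

Lemma dG1 (u U V : R -> R) t al : ex_derive u t -> ex_derive U t -> ex_derive V t -> 0 < u t ->
  0 < U t ^2 + sinh (u t) ^2 * V t ^2 ->
  is_derive (fun s => Rpower (u s) al * U s / sqrt (U s ^2 + sinh (u s) ^2 * V s ^2)) t
   (let u0 := u t in let d0 := Derive u t in let U0 := U t in let U1 := Derive U t in
    let V0 := V t in let V1 := Derive V t in let sh := sinh u0 in let ch := cosh u0 in
    let W := Rpower u0 al in let S := sqrt (U0^2 + sh^2 * V0^2) in
    let S1 := (U0 * U1 + sh * ch * d0 * V0^2 + sh^2 * V0 * V1) / S in
    W*(al*d0/u0)*U0/S + W*U1/S - W*U0*S1/S^2).
Proof. intros hu hU hV hu0 hS. auto_derive.
  - repeat split; auto using ex_derive_Rpow; try posarg hS.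
    apply Rgt_not_eq, sqrt_lt_R0; posarg hS.
  - cbv zeta. rewrite Derive_Rpow by auto.
    assert (HS : 0 < sqrt (U t ^ 2 + sinh (u t) ^ 2 * V t ^ 2)) by (apply sqrt_lt_R0; auto).
    canon_sqrt (U t ^ 2 + sinh (u t) ^ 2 * V t ^ 2).
    change (Derive (fun x => u x) t) with (Derive u t) in *.
    change (Derive (fun x => U x) t) with (Derive U t) in *.
    change (Derive (fun x => V x) t) with (Derive V t) in *.
    clearbody Sq. field. split; lra.
Qed.

Lemma dG2 (u U V : R -> R) t al : ex_derive u t -> ex_derive U t -> ex_derive V t -> 0 < u t ->
  0 < U t ^2 + sinh (u t) ^2 * V t ^2 ->
  is_derive (fun s => Rpower (u s) al * (sinh (u s) ^2 * V s) / sqrt (U s ^2 + sinh (u s) ^2 * V s ^2)) t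
   (let u0 := u t in let d0 := Derive u t in let U0 := U t in let U1 := Derive U t in
    let V0 := V t in let V1 := Derive V t in let sh := sinh u0 in let ch := cosh u0 in
    let W := Rpower u0 al in let S := sqrt (U0^2 + sh^2 * V0^2) in
    let S1 := (U0 * U1 + sh * ch * d0 * V0^2 + sh^2 * V0 * V1) / S in
    W*(al*d0/u0)*sh^2*V0/S + W*(2*sh*ch*d0*V0 + sh^2*V1)/S - W*sh^2*V0*S1/S^2).
Proof. intros hu hU hV hu0 hS. auto_derive.
  - repeat split; auto using ex_derive_Rpow; try posarg hS.
    apply Rgt_not_eq, sqrt_lt_R0; posarg hS.
  - cbv zeta. rewrite Derive_Rpow by auto.
    assert (HS : 0 < sqrt (U t ^ 2 + sinh (u t) ^ 2 * V t ^ 2)) by (apply sqrt_lt_R0; auto).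
    canon_sqrt (U t ^ 2 + sinh (u t) ^ 2 * V t ^ 2).
    change (Derive (fun x => u x) t) with (Derive u t) in *.
    change (Derive (fun x => U x) t) with (Derive U t) in *.
    change (Derive (fun x => V x) t) with (Derive V t) in *.
    clearbody Sq. field. split; lra.
Qed.

Lemma g1 u v s : ex_derive u s -> ex_derive v s ->
  Derive (fun r => Defs.c1 (gamma u v r)) s = cosh (u s) * Derive u s * cos (v s) - sinh (u s) * sin (v s) * Derive v s.
Proof. intros hu hv. apply is_derive_unique. unfold Defs.c1, gamma, Psi; simpl. auto_derive.
  - repeat split; auto.
  - change (Derive (fun x => u x) s) with (Derive u s) in *.
    change (Derive (fun x => v x) s) with (Derive v s) in *. ring.
Qed.
Lemma g2 u v s : ex_derive u s -> ex_derive v s ->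
  Derive (fun r => c2 (gamma u v r)) s = cosh (u s) * Derive u s * sin (v s) + sinh (u s) * cos (v s) * Derive v s.
Proof. intros hu hv. apply is_derive_unique. unfold c2, gamma, Psi; simpl. auto_derive.
  - repeat split; auto.
  - change (Derive (fun x => u x) s) with (Derive u s) in *.
    change (Derive (fun x => v x) s) with (Derive v s) in *. ring.
Qed.
Lemma g3 u v s : ex_derive u s -> ex_derive v s ->
  Derive (fun r => c3 (gamma u v r)) s = sinh (u s) * Derive u s.
Proof. intros hu hv. apply is_derive_unique. unfold c3, gamma, Psi; simpl. auto_derive.
  - repeat split; auto.
  - change (Derive (fun x => u x) s) with (Derive u s) in *. ring.
Qed.

Lemma h1 (u v U V : R -> R) t : ex_derive u t -> ex_derive v t -> ex_derive U t -> ex_derive V t ->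
  Derive u t = U t -> Derive v t = V t ->
  Derive (fun s => cosh (u s) * U s * cos (v s) - sinh (u s) * sin (v s) * V s) t =
  cos (v t) * (sinh (u t) * U t ^ 2 + cosh (u t) * Derive U t - sinh (u t) * V t ^ 2)
  - sin (v t) * (2 * cosh (u t) * U t * V t + sinh (u t) * Derive V t).
Proof. intros hu hv hU hV e1 e2. apply is_derive_unique. auto_derive.
  - repeat split; auto.
  - change (Derive (fun x => u x) t) with (Derive u t) in *.
    change (Derive (fun x => v x) t) with (Derive v t) in *.
    change (Derive (fun x => U x) t) with (Derive U t) in *.
    change (Derive (fun x => V x) t) with (Derive V t) in *. rewrite e1, e2. ring.
Qed.
Lemma h2 (u v U V : R -> R) t : ex_derive u t -> ex_derive v t -> ex_derive U t -> ex_derive V t ->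
  Derive u t = U t -> Derive v t = V t ->
  Derive (fun s => cosh (u s) * U s * sin (v s) + sinh (u s) * cos (v s) * V s) t =
  sin (v t) * (sinh (u t) * U t ^ 2 + cosh (u t) * Derive U t - sinh (u t) * V t ^ 2)
  + cos (v t) * (2 * cosh (u t) * U t * V t + sinh (u t) * Derive V t).
Proof. intros hu hv hU hV e1 e2. apply is_derive_unique. auto_derive.
  - repeat split; auto.
  - change (Derive (fun x => u x) t) with (Derive u t) in *.
    change (Derive (fun x => v x) t) with (Derive v t) in *.
    change (Derive (fun x => U x) t) with (Derive U t) in *.
    change (Derive (fun x => V x) t) with (Derive V t) in *. rewrite e1, e2. ring.
Qed.
Lemma h3 (u U : R -> R) t : ex_derive u t -> ex_derive U t ->
  Derive u t = U t ->
  Derive (fun s => sinh (u s) * U s) t = cosh (u t) * U t ^ 2 + sinh (u t) * Derive U t.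
Proof. intros hu hU e1. apply is_derive_unique. auto_derive.
  - repeat split; auto.
  - change (Derive (fun x => u x) t) with (Derive u t) in *.
    change (Derive (fun x => U x) t) with (Derive U t) in *. rewrite e1. ring.
Qed.

Lemma alg (al u0 u1 u2 v0 v1 v2 : R) : 0 < u0 -> 0 < u1^2 + sinh u0 ^2 * v1^2 ->
  let sh := sinh u0 in let ch := cosh u0 in let W := Rpower u0 al in
  let S := sqrt (u1^2 + sh^2 * v1^2) in
  let S1 := (u1 * u2 + sh * ch * u1 * v1^2 + sh^2 * v1 * v2) / S in
  let A1 := W*(al*u1/u0)*u1/S + W*u2/S - W*u1*S1/S^2 in
  let B1 := W*(al*u1/u0)*sh^2*v1/S + W*(2*sh*ch*u1*v1 + sh^2*v2)/S - W*sh^2*v1*S1/S^2 in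
  let Lx := al * W / u0 * S + W * (sh * ch * v1^2) / S in
  let P := sh*u1^2 + ch*u2 - sh*v1^2 in let Q := 2*ch*u1*v1 + sh*v2 in
  let X1 := cos v0 * P - sin v0 * Q in let X2 := sin v0 * P + cos v0 * Q in
  let X3 := ch*u1^2 + sh*u2 in
  let n := ((u1 * sin v0 + sh * ch * v1 * cos v0) / S,
            (sh * ch * v1 * sin v0 - u1 * cos v0) / S,
            (sh ^ 2 * v1) / S) in
  ((A1 = Lx /\ B1 = 0) <-> linner (X1, X2, X3) n / S^2 = al * linner n (xi u0 v0) / u0).
Proof.
  intros hu0 hT sh ch W S S1 A1 B1 Lx P Q X1 X2 X3 n.
  assert (hsh : 0 < sh) by (apply sinh_pos; auto).
  assert (hW : 0 < W) by apply Rpow_pos.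
  assert (hS : 0 < S) by (apply sqrt_lt_R0; unfold sh; auto).
  assert (hS2 : S * S = u1^2 + sh^2 * v1^2) by (apply sqrt_sqrt; unfold sh; lra).
  assert (cs : sin v0 ^ 2 + cos v0 ^ 2 = 1) by apply sn2cs2.
  assert (hc : cosh u0 ^ 2 - sinh u0 ^ 2 = 1) by apply ch2sh2.
  fold ch sh in hc.
  set (N := (P*sh*ch*v1 - Q*u1) - sh^2*v1*X3).
  assert (Hk : linner (X1, X2, X3) n = N / S).
  { transitivity (((P*sh*ch*v1 - Q*u1)*(sin v0^2+cos v0^2) - sh^2*v1*X3)/S).
    - unfold linner, n, X1, X2, Defs.c1, c2, c3; simpl. field. lra.
    - rewrite cs. unfold N. field. lra. }
  assert (Hx : linner n (xi u0 v0) = sh * v1 / S).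
  { transitivity (sh*v1*(ch^2*(sin v0^2+cos v0^2) - sh^2)/S).
    - unfold linner, n, xi, Defs.c1, c2, c3; simpl. fold sh ch. field. lra.
    - rewrite cs, Rmult_1_r, hc. field. lra. }
  rewrite Hk, Hx.
  set (Z := al*sh*v1*S^2 - u0*N).
  set (E1 := A1 - Lx). set (E2 := B1).
  assert (HD : u1*E1 + v1*E2 = (u1^2 + sh^2 * v1^2 - S^2)*(al*W*u1/(u0*S) - W*S1/S^2)).
  { unfold E1, E2, A1, B1, Lx, S1. field. lra. }
  assert (HC : -sh^2*v1*E1 + u1*E2 = (W*sh/(u0*S))*Z + (W*sh/S)*sh*v1*u2*(ch^2 - sh^2 - 1)).
  { unfold E1, E2, A1, B1, Lx, Z, N, X3, P, Q. field. lra. }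
  rewrite hc in HC. replace (1-1) with 0 in HC by ring.
  replace (S^2) with (S*S) in HD by ring. rewrite hS2 in HD. replace (_ - _) with 0 in HD by ring.
  rewrite Rmult_0_l in HD. rewrite Rmult_0_r, Rplus_0_r in HC.
  assert (hfac : 0 < W*sh/(u0*S)) by (apply Rdiv_lt_0_compat; apply Rmult_lt_0_compat; auto).
  split.
  - intros [e1 e2]. assert (E1 = 0) by (unfold E1; lra). assert (E2 = 0) by auto.
    assert (Z = 0).
    { assert (W * sh / (u0 * S) * Z = 0) by (rewrite <- HC; rewrite H, H0; ring).
      apply Rmult_integral in H1. destruct H1; lra. }
    assert (N = al*sh*v1*S^2/u0). { unfold Z in H1. field_simplify_eq; lra. }
    rewrite H2. field. lra.
  - intro hk. assert (Z = 0).
    { unfold Z. assert (N = al * (sh*v1/S) / u0 * S^2 * S).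
      { assert (N / S / S^2 * S^2 * S = N) by (field; lra). rewrite <- H, hk. auto. }
      rewrite H. field. lra. }
    rewrite H, Rmult_0_r in HC.
    assert (hT' := hT). fold sh in hT'.
    assert ((u1^2 + sh^2*v1^2) * E2 = 0).
    { transitivity (u1*(-sh^2*v1*E1 + u1*E2) + sh^2*v1*(u1*E1 + v1*E2)). ring. rewrite HC, HD. ring. }
    assert ((u1^2 + sh^2*v1^2) * E1 = 0).
    { transitivity (u1*(u1*E1 + v1*E2) - v1*(-sh^2*v1*E1 + u1*E2)). ring. rewrite HC, HD. ring. }
    apply Rmult_integral in H0. apply Rmult_integral in H1.
    split.
    + destruct H1; [lra|]. unfold E1 in H1. lra.
    + destruct H0; [lra|]. auto.
Qed.

Lemma isd_iff (f : R -> R) x A l : is_derive f x A -> (is_derive f x l <-> A = l).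
Proof. intro H. split; intro H'.
  - apply is_derive_unique in H. apply is_derive_unique in H'. congruence.
  - subst; auto. Qed.

Theorem proposition2p2 (alpha : R) (a b : Rbar) (u v : R -> R) :
  alpha <> 0 ->
  Rbar_lt a b ->
  (* u, v twice differentiable on (a,b) *)
  (forall t, in_open_int a b t ->
     ex_derive u t /\ ex_derive v t /\
     ex_derive (Derive u) t /\ ex_derive (Derive v) t) ->
  (* gamma avoids N *)
  (forall t, in_open_int a b t -> 0 < u t) ->
  (* gamma is regular *)
  (forall t, in_open_int a b t -> 0 < speed u v t) ->
  (stationary alpha a b u v <->
   forall t, in_open_int a b t ->
     curvature u v t =
       alpha * linner (normal u v t) (xi (u t) (v t)) / distN (u t) (v t)).
Proof.
intros Hal Hab Hd Hu Hsp.
assert (Harg : forall s, in_open_int a b s -> 0 < Derive u s ^ 2 + sinh (u s) ^ 2 * Derive v s ^ 2).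
{ intros s hs. apply sqrt_pos_arg. apply (Hsp s hs). }
assert (core : forall t, in_open_int a b t ->
  ((is_derive (fun s => Derive (fun p => Lag alpha (u s) (v s) p (Derive v s)) (Derive u s)) t
      (Derive (fun x => Lag alpha x (v t) (Derive u t) (Derive v t)) (u t))
   /\ is_derive (fun s => Derive (fun q => Lag alpha (u s) (v s) (Derive u s) q) (Derive v s)) t
      (Derive (fun y => Lag alpha (u t) y (Derive u t) (Derive v t)) (v t)))
  <-> curvature u v t = alpha * linner (normal u v t) (xi (u t) (v t)) / distN (u t) (v t))).
{ intros t ht. destruct (Hd t ht) as (d1 & d2 & d3 & d4).
  pose proof (Harg t ht) as hT. pose proof (Hu t ht) as hu0.
  assert (HF1 := dG1 u (Derive u) (Derive v) t alpha d1 d3 d4 hu0 hT).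
  apply (is_derive_ext_loc _ (fun s => Derive (fun p => Lag alpha (u s) (v s) p (Derive v s)) (Derive u s))) in HF1.
  2: { apply (filter_imp (fun s => in_open_int a b s)); [|apply loc_int; auto].
       intros s hs. rewrite DLp; auto. }
  assert (HF2 := dG2 u (Derive u) (Derive v) t alpha d1 d3 d4 hu0 hT).
  apply (is_derive_ext_loc _ (fun s => Derive (fun q => Lag alpha (u s) (v s) (Derive u s) q) (Derive v s))) in HF2.
  2: { apply (filter_imp (fun s => in_open_int a b s)); [|apply loc_int; auto].
       intros s hs. rewrite DLq; auto. }
  rewrite DLx by auto. rewrite DLy.
  rewrite (isd_iff _ _ _ _ HF1), (isd_iff _ _ _ _ HF2).
  assert (E1 : Derive (fun s => Defs.c1 (vderive (gamma u v) s)) t =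
     cos (v t) * (sinh (u t) * Derive u t ^ 2 + cosh (u t) * Derive (Derive u) t - sinh (u t) * Derive v t ^ 2)
     - sin (v t) * (2 * cosh (u t) * Derive u t * Derive v t + sinh (u t) * Derive (Derive v) t)).
  { transitivity (Derive (fun s => cosh (u s) * Derive u s * cos (v s) - sinh (u s) * sin (v s) * Derive v s) t).
    - apply Derive_ext_loc.
      apply (filter_imp (fun s => in_open_int a b s)); [|apply loc_int; auto].
      intros s hs. destruct (Hd s hs) as (e1 & e2 & _).
      change (Defs.c1 (vderive (gamma u v) s)) with (Derive (fun r => Defs.c1 (gamma u v r)) s).
      apply g1; auto.
    - apply h1; auto. }
  assert (E2 : Derive (fun s => c2 (vderive (gamma u v) s)) t =
     sin (v t) * (sinh (u t) * Derive u t ^ 2 + cosh (u t) * Derive (Derive u) t - sinh (u t) * Derive v t ^ 2)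
     + cos (v t) * (2 * cosh (u t) * Derive u t * Derive v t + sinh (u t) * Derive (Derive v) t)).
  { transitivity (Derive (fun s => cosh (u s) * Derive u s * sin (v s) + sinh (u s) * cos (v s) * Derive v s) t).
    - apply Derive_ext_loc.
      apply (filter_imp (fun s => in_open_int a b s)); [|apply loc_int; auto].
      intros s hs. destruct (Hd s hs) as (e1 & e2 & _).
      change (c2 (vderive (gamma u v) s)) with (Derive (fun r => c2 (gamma u v r)) s).
      apply g2; auto.
    - apply h2; auto. }
  assert (E3 : Derive (fun s => c3 (vderive (gamma u v) s)) t =
     cosh (u t) * Derive u t ^ 2 + sinh (u t) * Derive (Derive u) t).
  { transitivity (Derive (fun s => sinh (u s) * Derive u s) t).
    - apply Derive_ext_loc.
      apply (filter_imp (fun s => in_open_int a b s)); [|apply loc_int; auto].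
      intros s hs. destruct (Hd s hs) as (e1 & e2 & _).
      change (c3 (vderive (gamma u v) s)) with (Derive (fun r => c3 (gamma u v r)) s).
      apply g3; auto.
    - apply h3; auto. }
  unfold curvature. unfold vderive at 1. cbv beta. rewrite E1, E2, E3.
  exact (alg alpha (u t) (Derive u t) (Derive (Derive u) t) (v t) (Derive v t) (Derive (Derive v) t) hu0 hT). }
split.
- intros Hst t ht. apply core; auto.
- intros Hk t ht. apply core; auto.
Qed.
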